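(* Let the alternate quantum walk on $\mathbb{Z}^2$ with a single-qubit coin be defined on states $\sum_{x,y\in\mathbb{Z},\,c\in\{0,1\}}\beta_{x,y,c}(t)|x,y,c\rangle$, where one time step is $\hat S_y\hat H\hat S_x\hat H$, with $\hat H=\frac{1}{\sqrt2}\begin{pmatrix}1&1\\1&-1\end{pmatrix}$ acting on the coin, $\hat S_x|i,j,0\rangle=|i-1,j,0\rangle$, $\hat S_x|i,j,1\rangle=|i+1,j,1\rangle$, $\hat S_y|i,j,0\rangle=|i,j-1,0\rangle$, $\hat S_y|i,j,1\rangle=|i,j+1,1\rangle$. Start it at the origin with $\beta_{0,0,0}(0)=1/\sqrt2$, $\beta_{0,0,1}(0)=i/\sqrt2$ (all other amplitudes zero). Let the Grover walk have real amplitudes $\alpha_{x,y,c'}(t)$, $c'\in\{0,1,2,3\}$, evolving by $\alpha_{x,y,0}(t+1)=\sum_{j}G_{0j}\alpha_{x+1,y+1,j}(t)$, $\alpha_{x,y,1}(t+1)=\sum_{j}G_{1j}\alpha_{x+1,y-1,j}(t)$, $\alpha_{x,y,2}(t+1)=\sum_{j}G_{2j}\alpha_{x-1,y+1,j}(t)$, $\alpha_{x,y,3}(t+1)=\sum_{j}G_{3j}\alpha_{x-1,y-1,j}(t)$, where $G=\frac12\begin{pmatrix}-1&1&1&1\\1&-1&1&1\\1&1&-1&1\\1&1&1&-1\end{pmatrix}$, started at the origin with $\alpha_{0,0,0}(0)=1/2$, $\alpha_{0,0,1}(0)=-1/2$, $\alpha_{0,0,2}(0)=-1/2$, $\alpha_{0,0,3}(0)=1/2$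 (all other amplitudes zero). Then for all $t\ge0$ and all $(x,y)\in\mathbb{Z}^2$, \[ \beta_{x,y,0}(t)=(-1)^t e^{i\pi/4}\,[\alpha_{x,y,0}(t)+i\,\alpha_{x,y,2}(t)],\qquad \beta_{x,y,1}(t)=(-1)^t e^{i\pi/4}\,[-\alpha_{x,y,1}(t)+i\,\alpha_{x,y,3}(t)]. \]
   Context: $|x,y,c\rangle=|x,y\rangle_W\otimes|c\rangle_C$ with walker basis states $|x,y\rangle$, $x,y\in\mathbb{Z}$. In the Grover walk, coin states $|0\rangle,|1\rangle,|2\rangle,|3\rangle$ correspond to moves left-down, left-up, right-down, right-up, applied after the coin $G$. *)

(* Defs.v *)
From Stdlib Require Import Reals ZArith.
From Coquelicot Require Import Coquelicot.

Local Open Scope C_scope.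

(* Coins are encoded by nat: qubit coin in {0,1}, Grover coin in {0,1,2,3}.
   Values outside the range are given amplitude 0 and never used. *)

Definition qstate := Z -> Z -> nat -> C.

Definition Hcoin (psi : qstate) : qstate := fun x y c =>
  match c with
  | 0%nat => (psi x y 0%nat + psi x y 1%nat) / RtoC (sqrt 2)
  | 1%nat => (psi x y 0%nat - psi x y 1%nat) / RtoC (sqrt 2)
  | _ => 0
  end.

(* S_x |i,j,0> = |i-1,j,0>,  S_x |i,j,1> = |i+1,j,1>  (action on amplitudes) *)
Definition Sx (psi : qstate) : qstate := fun x y c =>
  match c with
  | 0%nat => psi (x + 1)%Z y 0%nat
  | 1%nat => psi (x - 1)%Z y 1%nat
  | _ => 0
  end.

Definition Sy (psi : qstate) : qstate := fun x y c =>
  match c with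
  | 0%nat => psi x (y + 1)%Z 0%nat
  | 1%nat => psi x (y - 1)%Z 1%nat
  | _ => 0
  end.

Definition alt_step (psi : qstate) : qstate := Sy (Hcoin (Sx (Hcoin psi))).

Definition beta0 : qstate := fun x y c =>
  if (Z.eqb x 0 && Z.eqb y 0)%bool then
    match c with
    | 0%nat => 1 / RtoC (sqrt 2)
    | 1%nat => Ci / RtoC (sqrt 2)
    | _ => 0
    end
  else 0.

Definition beta (t : nat) : qstate := Nat.iter t alt_step beta0.

Definition gstate := Z -> Z -> nat -> R.

Definition G (i j : nat) : R := if Nat.eqb i j then (-1/2)%R else (1/2)%R.

Definition Gsum (i : nat) (a : nat -> R) : R :=
  (G i 0 * a 0%nat + G i 1 * a 1%nat + G i 2 * a 2%nat + G i 3 * a 3%nat)%R.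

Definition grover_step (a : gstate) : gstate := fun x y c =>
  match c with
  | 0%nat => Gsum 0 (a (x + 1)%Z (y + 1)%Z)
  | 1%nat => Gsum 1 (a (x + 1)%Z (y - 1)%Z)
  | 2%nat => Gsum 2 (a (x - 1)%Z (y + 1)%Z)
  | 3%nat => Gsum 3 (a (x - 1)%Z (y - 1)%Z)
  | _ => 0%R
  end.

Definition alpha0 : gstate := fun x y c =>
  if (Z.eqb x 0 && Z.eqb y 0)%bool then
    match c with
    | 0%nat => (1/2)%R
    | 1%nat => (-1/2)%R
    | 2%nat => (-1/2)%R
    | 3%nat => (1/2)%R
    | _ => 0%R
    end
  else 0%R.

Definition alpha (t : nat) : gstate := Nat.iter t grover_step alpha0.

Definition e_ipi4 : C := (cos (PI / 4), sin (PI / 4)).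

(* Main.v *)
Require Import Defs.
From Stdlib Require Import Reals ZArith Lra.
From Coquelicot Require Import Coquelicot.

Definition Iv (a : gstate) := forall u v : Z,
  (a u v 0%nat + a u v 1%nat + a (u+2)%Z v 2%nat + a (u+2)%Z v 3%nat = 0)%R.
Definition Jv (a : gstate) := forall p q : Z,
  (a p (q+2)%Z 1%nat + a p (q+2)%Z 3%nat + a p q 0%nat + a p q 2%nat = 0)%R.

Lemma IJ : forall t, Iv (alpha t) /\ Jv (alpha t).
Proof.
  induction t as [|t [HI HJ]].
  - split; intros u v; unfold alpha, alpha0; simpl;
    destruct (Z.eqb u 0) eqn:E1; destruct (Z.eqb v 0) eqn:E2; simpl; try lra;
    try (destruct (Z.eqb (u+2) 0); simpl; lra);
    try (destruct (Z.eqb (v+2) 0); simpl; lra);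
    try (rewrite Bool.andb_false_r; lra).
  - change (alpha (S t)) with (grover_step (alpha t)).
    split; intros u v; unfold grover_step, Gsum, G; simpl.
    + specialize (HJ (u+1)%Z (v-1)%Z).
      replace (v-1+2)%Z with (v+1)%Z in HJ by ring.
      replace (u+2-1)%Z with (u+1)%Z by ring. lra.
    + specialize (HI (u-1)%Z (v+1)%Z).
      replace (u-1+2)%Z with (u+1)%Z in HI by ring.
      replace (v+2-1)%Z with (v+1)%Z by ring. lra.
Qed.


Lemma Lp : forall a b : C, ((a / RtoC (sqrt 2) + b / RtoC (sqrt 2)) / RtoC (sqrt 2) = (a + b) / RtoC 2)%C.
Proof.
  intros [a1 a2] [b1 b2].
  assert (Hs : (sqrt 2 * sqrt 2 = 2)%R) by (apply sqrt_sqrt; lra).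
  assert (Hp : (0 < sqrt 2)%R) by (apply sqrt_lt_R0; lra).
  generalize dependent (sqrt 2); intros r Hs Hp.
  apply injective_projections; simpl.
  all: field_simplify; try lra.
  all: replace (r^4)%R with 4%R by (replace (r^4)%R with ((r*r)*(r*r))%R by ring; rewrite Hs; ring);
    replace (r^2)%R with 2%R by (replace (r^2)%R with (r*r)%R by ring; symmetry; exact Hs); field.
Qed.

Lemma Lm : forall a b : C, ((a / RtoC (sqrt 2) - b / RtoC (sqrt 2)) / RtoC (sqrt 2) = (a - b) / RtoC 2)%C.
Proof.
  intros [a1 a2] [b1 b2].
  assert (Hs : (sqrt 2 * sqrt 2 = 2)%R) by (apply sqrt_sqrt; lra).
  assert (Hp : (0 < sqrt 2)%R) by (apply sqrt_lt_R0; lra).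
  generalize dependent (sqrt 2); intros r Hs Hp.
  apply injective_projections; simpl.
  all: field_simplify; try lra.
  all: replace (r^4)%R with 4%R by (replace (r^4)%R with ((r*r)*(r*r))%R by ring; rewrite Hs; ring);
    replace (r^2)%R with 2%R by (replace (r^2)%R with (r*r)%R by ring; symmetry; exact Hs); field.
Qed.

Theorem theorem1 : forall (t : nat) (x y : Z),
  beta t x y 0%nat =
    ((RtoC (-1)) ^ t * e_ipi4 *
     (RtoC (alpha t x y 0%nat) + Ci * RtoC (alpha t x y 2%nat)))%C /\
  beta t x y 1%nat =
    ((RtoC (-1)) ^ t * e_ipi4 *
     (- RtoC (alpha t x y 1%nat) + Ci * RtoC (alpha t x y 3%nat)))%C.
Proof.
  induction t as [|t IH]; intros x y.
  - unfold beta, alpha, alpha0, beta0; simpl.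
    unfold e_ipi4; rewrite cos_PI4, sin_PI4.
    assert (Hs : (sqrt 2 * sqrt 2 = 2)%R) by (apply sqrt_sqrt; lra).
    assert (Hp : (0 < sqrt 2)%R) by (apply sqrt_lt_R0; lra).
    destruct (Z.eqb x 0 && Z.eqb y 0)%bool; split;
    apply injective_projections; simpl; field; lra.
  - destruct (IJ t) as [HI _].
    change (beta (S t)) with (alt_step (beta t)).
    change (alpha (S t)) with (grover_step (alpha t)).
    unfold alt_step, Sy, Hcoin, Sx, grover_step, Gsum, G; simpl.
    rewrite !(proj1 (IH _ _)), !(proj2 (IH _ _)).
    split.
    + specialize (HI (x-1)%Z (y+1)%Z).
      replace (x-1+2)%Z with (x+1)%Z in HI by ring.
      rewrite Lp.
      replace (alpha t (x + 1)%Z (y + 1)%Z 3%nat) with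
        (- (alpha t (x - 1)%Z (y + 1)%Z 0%nat + alpha t (x - 1)%Z (y + 1)%Z 1%nat +
            alpha t (x + 1)%Z (y + 1)%Z 2%nat))%R by lra.
      generalize (Cpow (RtoC (-1)) t) e_ipi4. intros [wr wi] [er ei].
      apply injective_projections; simpl; field.
    + specialize (HI (x-1)%Z (y-1)%Z).
      replace (x-1+2)%Z with (x+1)%Z in HI by ring.
      rewrite Lm.
      replace (alpha t (x + 1)%Z (y - 1)%Z 3%nat) with
        (- (alpha t (x - 1)%Z (y - 1)%Z 0%nat + alpha t (x - 1)%Z (y - 1)%Z 1%nat +
            alpha t (x + 1)%Z (y - 1)%Z 2%nat))%R by lra.
      generalize (Cpow (RtoC (-1)) t) e_ipi4. intros [wr wi] [er ei].
      apply injective_projections; simpl; field.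
Qed.
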